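(* Let $(X,\tau_\delta)_{\delta>0}$ be a simple Hilbert dilation system, with the orthonormal basis $e_1,\dots,e_d$ of $X$ satisfying $\tau_\delta e_j=\delta^{-\nu_j}e_j$, $\nu_1<\dots<\nu_d$. Let $H$ be a $k$-dimensional subspace, $1\le k\le d$. Suppose $\epsilon\in(0,1/2)$, $\delta,\delta'>0$ with $\delta\ge\epsilon^{-2}\delta'$, and $S,S'\subseteq\{1,\dots,d\}$ with $\#S=\#S'=k$ satisfy $|\langle\omega_{\tau_\delta H},\omega_S\rangle|\ge\epsilon|\omega_{\tau_\delta H}|$ and $|\langle\omega_{\tau_{\delta'}H},\omega_{S'}\rangle|\ge\epsilon|\omega_{\tau_{\delta'}H}|$. Then $c_\ell(S)\ge c_\ell(S')$ for all $\ell=1,\dots,d$.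
   Context: Hilbert dilation system: $X$ finite-dimensional real Hilbert space, $X=\bigoplus_{\nu=1}^mX_\nu$ orthogonal, $\tau_\delta|_{X_\nu}=\delta^{-\nu}\mathrm{id}$; simple means $\dim X_\nu\in\{0,1\}$; the indices $\nu$ with $\dim X_\nu=1$ are $\nu_1<\dots<\nu_d$ and $e_j$ is a unit vector spanning $X_{\nu_j}$. On $\bigwedge^kX$ the inner product is the bilinear extension of $\langle v_1\wedge\dots\wedge v_k,w_1\wedge\dots\wedge w_k\rangle=\det(\langle v_i,w_j\rangle)$. For a $k$-dimensional subspace $W$, $\omega_W=w_1\wedge\dots\wedge w_k$ for some basis $w_1,\dots,w_k$ of $W$ (any choice). For $S\subseteq\{1,\dots,d\}$, $\omega_S=\bigwedge_{j\in S}e_j$ (increasing order) and $c_\ell(S)=\#\{j\in S:j\le\ell\}$. *)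

(* Defs.v *)
(* X is modelled as R^d (row vectors 'rV[R]_d) with the
   standard orthonormal basis e_j (j : 'I_d, 0-based), R a real closed field. *)
From mathcomp Require Import all_boot all_order all_algebra.
Set Implicit Arguments. Unset Strict Implicit. Unset Printing Implicit Defensive.
Import Order.TTheory GRing.Theory Num.Theory.
Local Open Scope ring_scope.

Section Defs.
Variables (R : rcfType) (d : nat).

Definition tau (nu : 'I_d -> nat) (delta : R) : 'M[R]_d :=
  diag_mx (\row_j (delta ^- nu j)).

(* For V, W : 'M_(k,d) whose rows are v_1..v_k and w_1..w_k,
   <v_1 /\ .. /\ v_k, w_1 /\ .. /\ w_k> = det(<v_i, w_j>) = det (V W^T). *)
Definition wedge_ip (k : nat) (V W : 'M[R]_(k, d)) : R := \det (V *m W^T).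

Definition wedge_norm (k : nat) (V : 'M[R]_(k, d)) : R := Num.sqrt (wedge_ip V V).

(* Rows e_{s_1}, .., e_{s_k} with s_1 < .. < s_k the elements of S
   (meaningful when #|S| = k); its wedge is omega_S. *)
Definition omegaS (k : nat) (S : {set 'I_d}) : 'M[R]_(k, d) :=
  \matrix_(i < k, j < d) ((val j == nth 0%N [seq val x | x <- enum S] i)%:R).

End Defs.

(* c_l(S) = #{ j in S : j <= l } with 1-based indices; with 0-based
   ordinals this is #{ j in S : val j < l }. *)
Definition cnt (d : nat) (l : nat) (S : {set 'I_d}) : nat :=
  #|[set j in S | (val j < l)%N]|.

(* Main.v *)
Require Import Defs.
From mathcomp Require Import all_boot all_order all_algebra.
From mathcomp Require Import perm ring lra zify.
Set Implicit Arguments. Unset Strict Implicit. Unset Printing Implicit Defensive.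
Import Order.TTheory GRing.Theory Num.Theory.
Local Open Scope ring_scope.


Section CBs.
Variable R : rcfType.
Variables k d : nat.
Implicit Type M : 'M[R]_(k, d).

Definition Dt M (f : 'I_k -> 'I_d) : R := \det (colsub f M).

Lemma Dt_perm M (f : 'I_k -> 'I_d) (s : 'S_k) :
  Dt M (fun a => f (s a)) = (-1) ^+ s * Dt M f.
Proof.
rewrite /Dt.
have -> : colsub (fun a => f (s a)) M = col_perm s (colsub f M).
  by apply/matrixP => i j; rewrite !mxE.
by rewrite col_permE det_mulmx det_perm odd_permV mulrC.
Qed.

Lemma Dt_leib M (f : 'I_k -> 'I_d) :
  Dt M f = \sum_(s : 'S_k) (-1) ^+ s * \prod_a M a (f (s a)).
Proof. by rewrite /Dt /determinant; apply: eq_bigr => s _; congr (_ * _); apply: eq_bigr => a _; rewrite mxE. Qed.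

Lemma CB1 M : \det (M *m M^T) =
  \sum_(f : {ffun 'I_k -> 'I_d}) (\prod_a M a (f a)) * Dt M f.
Proof.
rewrite /determinant.
transitivity (\sum_(s : 'S_k) \sum_(f : {ffun 'I_k -> 'I_d})
   (-1) ^+ s * \prod_a (M a (f a) * M (s a) (f a))).
  apply: eq_bigr => s _; rewrite -big_distrr /=; congr (_ * _).
  transitivity (\prod_a \sum_c (M a c * M (s a) c)).
    by apply: eq_bigr => a _; rewrite mxE; apply: eq_bigr => c _; rewrite mxE.
  by rewrite bigA_distr_bigA.
rewrite exchange_big; apply: eq_bigr => f _.
rewrite /Dt -det_tr /determinant big_distrr /=; apply: eq_bigr => s _.
rewrite big_split /= mulrCA; congr (_ * (_ * _)).
by apply: eq_bigr => a _; rewrite !mxE.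
Qed.

Lemma CB M : (k`!)%:R * \det (M *m M^T) =
  \sum_(f : {ffun 'I_k -> 'I_d}) Dt M f ^+ 2.
Proof.
rewrite CB1 -(card_Sn k) -sum1_card natr_sum big_distrl /=.
transitivity (\sum_(s : 'S_k) \sum_(f : {ffun 'I_k -> 'I_d})
   (\prod_a M a (f (s a))) * ((-1) ^+ s * Dt M f)).
  apply: eq_bigr => s _; rewrite mul1r.
  rewrite (reindex_inj (h := fun f : {ffun 'I_k -> 'I_d} => [ffun a => f (s a)])).
    apply: eq_bigr => f _; rewrite -Dt_perm; congr (_ * _).
      by apply: eq_bigr => a _; rewrite ffunE.
    rewrite /Dt; by congr (\det _); apply/matrixP => i j; rewrite !mxE ffunE.
  move=> f g /ffunP E; apply/ffunP => a.
  by have := E (s^-1 a)%g; rewrite !ffunE permKV.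
rewrite exchange_big; apply: eq_bigr => f _.
rewrite expr2 [X in _ = X * _]Dt_leib big_distrl /=.
by apply: eq_bigr => s _; rewrite mulrCA mulrA.
Qed.

End CBs.


Section K.
Variable R : rcfType.

Lemma sumsum (I : finType) (f g : I -> R) :
  \sum_i \sum_j f i * g j = (\sum_i f i) * (\sum_j g j).
Proof. by rewrite big_distrl; apply: eq_bigr => i _; rewrite big_distrr. Qed.

Lemma CS (I : finType) (a b : I -> R) :
  (\sum_i a i * b i) ^+ 2 <= (\sum_i a i ^+ 2) * (\sum_i b i ^+ 2).
Proof.
have H : 0 <= \sum_i \sum_j (a i * b j - a j * b i) ^+ 2.
  by apply: sumr_ge0 => i _; apply: sumr_ge0 => j _; exact: sqr_ge0.
have E : \sum_i \sum_j (a i * b j - a j * b i) ^+ 2 =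
   \sum_i \sum_j (a i ^+ 2 * b j ^+ 2) + \sum_i \sum_j (b i ^+ 2 * a j ^+ 2)
       - 2 * (\sum_i \sum_j ((a i * b i) * (a j * b j))).
  rewrite mulr_sumr -!big_split -sumrB; apply: eq_bigr => i _.
  rewrite mulr_sumr -!big_split -sumrB; apply: eq_bigr => j _ /=; ring.
rewrite E !sumsum in H.
rewrite expr2; lra.
Qed.

End K.


Section K2.
Variable R : rcfType.
Variables k d : nat.
Implicit Type M : 'M[R]_(k, d).

Definition upd (s : 'I_k -> 'I_d) (i : 'I_k) (j : 'I_d) : 'I_k -> 'I_d :=
  fun t => if t == i then j else s t.

Lemma cramer M (s : 'I_k -> 'I_d) (x : 'rV[R]_k) (j : 'I_d) :
  Dt M s * (x *m M) 0 j = \sum_i (x *m M) 0 (s i) * Dt M (upd s i j).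
Proof.
set B := colsub s M; set c := col j M.
have Ey : forall i, (\adj B *m c) i 0 = Dt M (upd s i j).
  move=> i; rewrite /Dt (expand_det_col _ i) mxE; apply: eq_bigr => r _.
  rewrite !mxE /upd eqxx mulrC; congr (_ * _).
  rewrite /cofactor; congr (_ * \det _).
  by apply/matrixP => a b; rewrite !mxE eq_sym (negbTE (neq_lift i b)).
have Ew : forall i, (x *m M) 0 (s i) = (x *m B) 0 i.
  by move=> i; rewrite !mxE; apply: eq_bigr => r _; rewrite !mxE.
have Ej : (x *m M) 0 j = (x *m c) 0 0.
  by rewrite !mxE; apply: eq_bigr => r _; rewrite !mxE.
transitivity (((x *m B) *m (\adj B *m c)) 0 0).
  rewrite Ej mulmxA -(mulmxA x) mul_mx_adj mul_mx_scalar -scalemxAl [in RHS]mxE.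
  by rewrite /Dt.
rewrite mxE; apply: eq_bigr => i _; by rewrite Ew Ey.
Qed.

End K2.


Section K3.
Variable R : rcfType.
Variables k d : nat.
Implicit Type M : 'M[R]_(k, d).

Lemma sum_option (X : finType) (G : option X -> R) :
  \sum_o G o = G None + \sum_x G (Some x).
Proof.
rewrite (bigD1 None) //=; congr (_ + _).
rewrite (reindex_omap (fun x => Some x) id) /=; last by case.
by apply: eq_bigl => x /=; apply/eqP.
Qed.

Variable s : 'I_k -> 'I_d.
Hypothesis s_inj : injective s.
Let S := [set s i | i : 'I_k].

Definition gg (o : option ('I_k * 'I_d)) : 'I_k -> 'I_d :=
  if o is Some (i, j) then upd s i j else s.

Definition PP (o : option ('I_k * 'I_d)) : bool :=
  if o is Some (i, j) then j \notin S else true.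

Lemma sS t : s t \in S. Proof. exact: imset_f. Qed.

Lemma upd_inj i j : j \notin S -> injective (upd s i j).
Proof.
move=> jS a b; rewrite /upd.
case: (eqVneq a i) => [->|ai]; case: (eqVneq b i) => [->|bi] //.
- by move=> E; move: jS; rewrite E sS.
- by move=> E; move: jS; rewrite -E sS.
- exact: s_inj.
Qed.

Lemma gg_inj o : PP o -> injective (gg o).
Proof. by case: o => [[i j]|] /=; [exact: upd_inj | move=> _; exact: s_inj]. Qed.

Lemma Phi_inj (sg sg' : 'S_k) o o' : PP o -> PP o' ->
  (forall a, gg o (sg a) = gg o' (sg' a)) -> o = o' /\ sg = sg'.
Proof.
move=> Po Po' E.
have oo : o = o'.
  case: o Po E => [[i j]|]; case: o' Po' => [[i' j']|] //= Po' Po E.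
  - have E1 := E (sg'^-1 i')%g; rewrite /gg permKV /upd eqxx in E1.
    move: E1; case: (eqVneq (sg (sg'^-1 i')%g) i) => [Hi ->|Hi E1]; last first.
      by move: Po'; rewrite -E1 sS.
    case: (eqVneq i i') => [<-//|ii].
    have E2 := E (sg^-1 i')%g; rewrite /gg permKV /upd eq_sym (negbTE ii) in E2.
    move: E2; case: (eqVneq (sg' (sg^-1 i')%g) i') => [_ E2|Hi2 /s_inj E2].
      by move: Po'; rewrite -E2 sS.
    by move: Hi2; rewrite -E2 eqxx.
  - by have := E (sg^-1 i)%g; rewrite /gg permKV /upd eqxx => E1; move: Po; rewrite E1 sS.
  - by have := E (sg'^-1 i')%g; rewrite /gg permKV /upd eqxx => E1; move: Po'; rewrite -E1 sS.
split=> //; subst o'; apply/permP => a; exact: (gg_inj Po (E a)).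
Qed.

Lemma Bound M :
  (k`!)%:R * (Dt M s ^+ 2 + \sum_(j | j \notin S) \sum_i Dt M (upd s i j) ^+ 2)
  <= \sum_(f : {ffun 'I_k -> 'I_d}) Dt M f ^+ 2.
Proof.
pose Phi (p : 'S_k * option ('I_k * 'I_d)) : {ffun 'I_k -> 'I_d} :=
  [ffun a => gg p.2 (p.1 a)].
pose A := [pred p : 'S_k * option ('I_k * 'I_d) | PP p.2].
have injPhi : {in A &, injective Phi}.
  move=> [sg o] [sg' o'] /= Po Po' /ffunP E.
  have [eo es] : o = o' /\ sg = sg'.
    by apply: Phi_inj => // a; have := E a; rewrite !ffunE.
  by rewrite eo es.
have -> : (k`!)%:R * (Dt M s ^+ 2 + \sum_(j | j \notin S) \sum_i Dt M (upd s i j) ^+ 2)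
    = \sum_(f in Phi @: A) Dt M f ^+ 2.
  rewrite big_imset //= -(card_Sn k) -sum1_card natr_sum big_distrl /=.
  transitivity (\sum_(sg : 'S_k) \sum_(o | PP o) Dt M (Phi (sg,o)) ^+ 2); last first.
    by rewrite (pair_big_dep xpredT (fun _ o => PP o)); apply: eq_bigl => p.
  apply: eq_bigr => sg _; rewrite mul1r.
  have DP : forall o, Dt M (Phi (sg, o)) ^+ 2 = Dt M (gg o) ^+ 2.
    move=> o; have -> : Dt M (Phi (sg, o)) = Dt M (fun a => gg o (sg a)).
      by rewrite /Dt; congr (\det _); apply/matrixP => i j; rewrite !mxE ffunE.
    by rewrite Dt_perm exprMn sqrr_sign mul1r.
  rewrite [RHS](eq_bigr (fun o => Dt M (gg o) ^+ 2)); last by move=> o _; exact: DP.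
  rewrite [RHS]big_mkcond sum_option /=; congr (_ + _).
  rewrite (exchange_big_dep xpredT) //=.
  rewrite (pair_big_dep xpredT (fun _ j => (j \notin S) && true)) /= big_mkcond.
  by apply: eq_bigr => [[i j]] _ /=; rewrite andbT.
rewrite [X in _ <= X](bigID (fun f => f \in Phi @: A)) /= lerDl.
by apply: sumr_ge0 => f _; exact: sqr_ge0.
Qed.

End K3.


Section K4.
Variable R : rcfType.
Variables k d : nat.
Implicit Type M : 'M[R]_(k, d).
Variable s : 'I_k -> 'I_d.
Hypothesis s_inj : injective s.
Let S := [set s i | i : 'I_k].

Lemma keyF M (x : 'rV[R]_k) :
  Dt M s ^+ 2 * \sum_j (x *m M) 0 j ^+ 2 <=
  (\sum_i (x *m M) 0 (s i) ^+ 2) * \det (M *m M^T).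
Proof.
set w := x *m M.
set WS := \sum_i w 0 (s i) ^+ 2.
set T := \sum_(j | j \notin S) \sum_i Dt M (upd s i j) ^+ 2.
have HS : \sum_(j in S) w 0 j ^+ 2 = WS.
  by rewrite big_imset //= => a b _ _; exact: s_inj.
have Hc : forall j, Dt M s ^+ 2 * w 0 j ^+ 2 <= WS * \sum_i Dt M (upd s i j) ^+ 2.
  move=> j; rewrite -exprMn cramer; exact: CS.
have HT : Dt M s ^+ 2 * \sum_(j | j \notin S) w 0 j ^+ 2 <= WS * T.
  rewrite mulr_sumr /T mulr_sumr; apply: ler_sum => j _; exact: Hc.
have HB := Bound s_inj M.
rewrite -CB in HB.
have kpos : 0 < (k`!)%:R :> R by rewrite ltr0n fact_gt0.
have HB' : Dt M s ^+ 2 + T <= \det (M *m M^T).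
  by rewrite -(ler_pM2l kpos).
rewrite (bigID (fun j => j \in S)) /= HS mulrDr.
have WS0 : 0 <= WS by apply: sumr_ge0 => i _; exact: sqr_ge0.
apply: le_trans (_ : WS * (Dt M s ^+ 2 + T) <= _); last exact: ler_wpM2l.
rewrite mulrDr mulrC; exact: lerD.
Qed.

End K4.


Section K5.
Variable R : rcfType.
Variables k d : nat.
Implicit Type M : 'M[R]_(k, d).

Lemma keyE M (s : 'I_k -> 'I_d) (eps : R) (x : 'rV[R]_k) :
  injective s -> 0 < eps -> 0 < \det (M *m M^T) ->
  eps * Num.sqrt (\det (M *m M^T)) <= `|Dt M s| ->
  eps ^+ 2 * \sum_j (x *m M) 0 j ^+ 2 <= \sum_(j in [set s i | i : 'I_k]) (x *m M) 0 j ^+ 2.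
Proof.
move=> sinj e0 G0 H.
have HS : \sum_(j in [set s i | i : 'I_k]) (x *m M) 0 j ^+ 2 = \sum_i (x *m M) 0 (s i) ^+ 2.
  by rewrite big_imset //= => a b _ _; exact: sinj.
rewrite HS.
have H2 : eps ^+ 2 * \det (M *m M^T) <= Dt M s ^+ 2.
  have P0 : 0 <= eps * Num.sqrt (\det (M *m M^T)) by rewrite mulr_ge0 ?sqrtr_ge0 // ltW.
  have := ler_pM P0 P0 H H; rewrite -!expr2.
  by rewrite exprMn (sqr_sqrtr (ltW G0)) real_normK ?num_real.
have K := keyF sinj M x.
have W0 : 0 <= \sum_j (x *m M) 0 j ^+ 2 by apply: sumr_ge0 => j _; exact: sqr_ge0.
rewrite -(ler_pM2r G0).
apply: le_trans K; rewrite mulrAC; exact: ler_wpM2r.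
Qed.

Lemma sum_le (I : finType) (P Q : pred I) (F : I -> R) :
  (forall j, 0 <= F j) -> (forall j, P j -> Q j \/ F j = 0) ->
  \sum_(j | P j) F j <= \sum_(j | Q j) F j.
Proof.
move=> F0 PQ; rewrite [X in X <= _]big_mkcond [X in _ <= X]big_mkcond.
apply: ler_sum => j _; case: ifP => Pj; case: ifP => Qj //.
- by case: (PQ j Pj); [rewrite Qj | move->].
Qed.

Lemma rf_crit m n (M : 'M[R]_(m, n)) : (forall v : 'rV[R]_m, v *m M = 0 -> v = 0) -> row_free M.
Proof.
move=> H; rewrite -kermx_eq0; apply/eqP/row_matrixP => i.
by rewrite row0; apply: H; rewrite -row_mul mulmx_ker row0.
Qed.

Lemma rf_inj m n (M : 'M[R]_(m, n)) : row_free M -> forall v : 'rV[R]_m, v *m M = 0 -> v = 0.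
Proof.
rewrite -kermx_eq0 => /eqP K v /sub_kermxP; rewrite K submx0 => /eqP //.
Qed.

Lemma Gpos M : row_free M -> 0 < \det (M *m M^T).
Proof.
move=> rf.
have kpos : 0 < (k`!)%:R :> R by rewrite ltr0n fact_gt0.
have G0 : 0 <= \det (M *m M^T).
  rewrite -(pmulr_rge0 _ kpos) CB; apply: sumr_ge0 => f _; exact: sqr_ge0.
rewrite lt_def G0 andbT -unitfE -unitmxE -row_free_unit; apply: rf_crit => v Hv.
apply: (rf_inj rf).
have E : ((v *m M) *m (v *m M)^T) 0 0 = 0.
  by rewrite trmx_mul mulmxA -(mulmxA v) Hv mul0mx mxE.
rewrite mxE in E; apply/rowP => j; rewrite [RHS]mxE.
have Z : forall i, true -> (v *m M) 0 i * (v *m M)^T i 0 = 0.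
  by apply: psumr_eq0P E => i _; rewrite [(v *m M)^T _ _]mxE -expr2 sqr_ge0.
by have := Z j isT; rewrite [(v *m M)^T _ _]mxE -expr2 => /eqP; rewrite sqrf_eq0 => /eqP.
Qed.

End K5.


Section K6.
Variable R : rcfType.
Variables k d : nat.

Lemma enum_fun (S : {set 'I_d}) : #|S| = k ->
  exists s : 'I_k -> 'I_d, [/\ injective s, [set s i | i : 'I_k] = S &
     forall i : 'I_k, val (s i) = nth 0%N [seq val x | x <- enum S] i].
Proof.
move=> HS; exists (fun i => enum_val (cast_ord (esym HS) i)); split.
- by move=> a b /enum_val_inj /cast_ord_inj.
- apply/setP => j; apply/imsetP/idP => [[i _ ->]|jS]; first exact: enum_valP.
  by exists (cast_ord HS (enum_rank_in jS j)) => //; rewrite cast_ordK enum_rankK_in.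
- move=> i; set i' := cast_ord (esym HS) i; have x0 := enum_val i'.
  rewrite (enum_val_nth x0) (nth_map x0 0%N) //.
  by rewrite -cardE; exact: (ltn_ord i').
Qed.

Lemma omegaE (M : 'M[R]_(k, d)) (S : {set 'I_d}) (s : 'I_k -> 'I_d) :
  injective s -> (forall i : 'I_k, val (s i) = nth 0%N [seq val x | x <- enum S] i) ->
  M *m (omegaS R k S)^T = colsub s M.
Proof.
move=> sinj Hs; apply/matrixP => a b; rewrite !mxE (bigD1 (s b)) //= big1 => [|c cb].
  by rewrite !mxE -Hs eqxx mulr1 addr0.
by rewrite !mxE -Hs (inj_eq val_inj) (negbTE cb) mulr0.
Qed.

Lemma exists_ker (A : 'M[R]_(k, d)) (Z : {set 'I_d}) : (#|Z| < k)%N ->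
  exists2 x : 'rV[R]_k, x != 0 & forall z, z \in Z -> (x *m A) 0 z = 0.
Proof.
move=> Zk.
pose Oz : 'M[R]_(#|Z|, d) := \matrix_(i, j) (j == enum_val i)%:R.
pose E := A *m Oz^T.
have rE : (\rank E < k)%N.
  apply: leq_ltn_trans Zk; apply: leq_trans (mxrankM_maxr _ _) _; exact: rank_leq_col.
set K := kermx E.
have K0 : K != 0.
  by rewrite -mxrank_eq0 mxrank_ker; apply/eqP => /eqP; rewrite subn_eq0 leqNgt rE.
have [i Hi] : exists i, row i K != 0.
  apply/existsP; rewrite -negb_forall; apply: contra K0 => /forallP H.
  by apply/eqP/row_matrixP => i; rewrite row0; apply/eqP/H.
exists (row i K) => // z zZ.
have xE : row i K *m E = 0 by rewrite -row_mul mulmx_ker row0.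
have := congr1 (fun m : 'rV_#|Z| => m 0 (enum_rank_in zZ z)) xE.
rewrite /E mulmxA [in X in X = _ -> _]mxE mxE => <-.
rewrite (bigD1 z) //= big1 => [|c cz]; rewrite !mxE enum_rankK_in //.
  by rewrite eqxx mulr1 addr0.
by rewrite (negbTE cz) mulr0.
Qed.

Lemma card_split (A : {set 'I_d}) (P : pred 'I_d) :
  (#|[set j in A | P j]| + #|[set j in A | ~~ P j]|)%N = #|A|.
Proof.
rewrite -(cardsID [set j | P j] A); congr (_ + _)%N; apply: eq_card => j;
  by rewrite !inE; case: (j \in A); case: (P j).
Qed.

Lemma pow_shift (a b : R) n : 0 < a -> 0 < b -> a ^- n = b ^- n * (b / a) ^+ n.
Proof.
move=> a0 b0; rewrite expr_div_n.
have an : a ^+ n != 0 by rewrite expf_neq0 // gt_eqF.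
have bn : b ^+ n != 0 by rewrite expf_neq0 // gt_eqF.
by rewrite mulrA mulVf // mul1r.
Qed.

End K6.


Lemma tauE (R : rcfType) (d k : nat) (nu : 'I_d -> nat) (A : 'M[R]_(k, d)) (x : 'rV[R]_k) dl j :
  (x *m (A *m tau nu dl)) 0 j = (x *m A) 0 j * dl ^- nu j.
Proof. by rewrite mulmxA /tau mul_mx_diag mxE [(\row__ _) _ _]mxE. Qed.

Lemma rf_tau (R : rcfType) (d k : nat) (nu : 'I_d -> nat) (A : 'M[R]_(k, d)) dl :
  0 < dl -> row_free A -> row_free (A *m tau nu dl).
Proof.
move=> d0 rf; apply: rf_crit => v Hv; apply: (rf_inj rf); apply/rowP => j.
have := congr1 (fun m : 'rV_d => m 0 j) Hv; rewrite /= tauE !mxE => /eqP.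
rewrite mulf_eq0 invr_eq0 expf_eq0 (gt_eqF d0) andbF orbF => /eqP //.
Qed.

Unset Implicit Arguments.

Theorem lemma4p5 (R : rcfType) (d k : nat) (nu : 'I_d -> nat)
  (A : 'M[R]_(k, d)) (eps delta delta' : R) (S S' : {set 'I_d}) :
  (forall j : 'I_d, (0 < nu j)%N) ->
  (forall i j : 'I_d, (i < j)%N -> (nu i < nu j)%N) ->
  (1 <= k <= d)%N ->
  row_free A ->
  0 < eps -> eps < 1 / 2 ->
  0 < delta -> 0 < delta' ->
  delta >= eps ^- 2 * delta' ->
  #|S| = k -> #|S'| = k ->
  `|wedge_ip (A *m tau nu delta) (omegaS R k S)| >= eps * wedge_norm (A *m tau nu delta) ->
  `|wedge_ip (A *m tau nu delta') (omegaS R k S')| >= eps * wedge_norm (A *m tau nu delta') ->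
  forall l : nat, (1 <= l <= d)%N -> (cnt l S >= cnt l S')%N.
Proof.
move=> nupos numono /andP[k1 kd] rfA e0 e2 dl0 dl0' hdel HS HS' H1 H2 l /andP[l1 ld].
rewrite leqNgt; apply/negP => Hlt.
have cle : forall T : {set 'I_d}, (cnt l T <= #|T|)%N.
  by move=> T; apply: subset_leq_card; apply/subsetP => j; rewrite inE => /andP[].
have ld' : (l < d)%N.
  rewrite ltn_neqAle ld andbT; apply/eqP => El; move: Hlt.
  have -> : cnt l S = k.
    rewrite /cnt -HS; apply: eq_card => j; rewrite inE El ltn_ord andbT //.
  by rewrite ltnNge -HS' cle.
pose ol : 'I_d := Ordinal ld'.
have [s [sinj sim sE]] := enum_fun HS.
have [s' [sinj' sim' sE']] := enum_fun HS'.
pose Z := [set j in S' | ~~ (val j < l)%N] :|: [set j in S | (val j < l)%N].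
have Zk : (#|Z| < k)%N.
  have c1 : (#|[set j in S' | (val j < l)%N]| + #|[set j in S' | ~~ (val j < l)%N]| = #|S'|)%N.
    exact: (card_split S' (fun j : 'I_d => (val j < l)%N)).
  move: Hlt; rewrite cardsU /cnt; lia.
have [x x0 xZ] := exists_ker A Zk.
set M := A *m tau nu delta; set M' := A *m tau nu delta'.
have rfM : row_free M by apply: rf_tau.
have rfM' : row_free M' by apply: rf_tau.
have GM := Gpos rfM; have GM' := Gpos rfM'.
rewrite /wedge_ip /wedge_norm /wedge_ip (omegaE _ sinj sE) in H1.
rewrite /wedge_ip /wedge_norm /wedge_ip (omegaE _ sinj' sE') in H2.
have K1 := keyE x sinj e0 GM H1; have K2 := keyE x sinj' e0 GM' H2.
rewrite sim in K1; rewrite sim' in K2.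
set a := x *m A.
pose F j := (x *m M) 0 j ^+ 2; pose F' j := (x *m M') 0 j ^+ 2.
have {}K1 : eps ^+ 2 * \sum_j F j <= \sum_(j in S) F j := K1.
have {}K2 : eps ^+ 2 * \sum_j F' j <= \sum_(j in S') F' j := K2.
have F0 : forall j, 0 <= F j by move=> j; exact: sqr_ge0.
have F0' : forall j, 0 <= F' j by move=> j; exact: sqr_ge0.
set e := eps ^+ 2.
have e0' : 0 < e by rewrite exprn_gt0.
have e1 : e <= 1 / 4.
  have : eps * eps <= (1/2) * (1/2) by apply: ler_pM; rewrite ?ltW.
  by rewrite -expr2 => H; apply: le_trans H _; lra.
pose q := delta' / delta.
have q0 : 0 < q by rewrite divr_gt0.
have qe : q <= e.
  rewrite ler_pdivrMr //.
  have -> : delta' = e * (eps ^- 2 * delta').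
    by rewrite mulrA /e mulfV ?mul1r // expf_neq0 // gt_eqF.
  by rewrite ler_wpM2l // ltW.
pose q2 := q ^+ 2.
have q20 : 0 <= q2 by rewrite sqr_ge0.
have q2e : q2 <= e ^+ 2.
  by rewrite /q2 !expr2; apply: ler_pM => //; exact: ltW.
have q21 : q2 <= 1 by apply: le_trans q2e _; rewrite expr2; nra.
have FF : forall j, F j = F' j * q2 ^+ nu j.
  move=> j; rewrite /F /F' !tauE (pow_shift _ dl0 dl0') -/q mulrA exprMn.
  by rewrite /q2 exprAC.
pose N := nu ol.
have hU : forall j : 'I_d, ~~ (val j < l)%N -> q2 ^+ nu j <= q2 ^+ N.
  move=> j Hj; apply: (ler_wiXn2l q20 q21).
  case: (eqVneq j ol) => [->//|jo]; apply: ltnW; apply: numono.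
  by rewrite /= ltn_neqAle leqNgt Hj andbT; apply: contra jo => /eqP E; apply/eqP/val_inj.
have hL : forall j : 'I_d, (val j < l)%N -> q2 ^+ N <= e ^+ 2 * q2 ^+ nu j.
  move=> j Hj; have : (nu j < N)%N by apply: numono.
  rewrite /N; case: (nu ol) => [//|n] Hn.
  rewrite exprSr mulrC; apply: ler_pM => //; first exact: exprn_ge0.
  by apply: (ler_wiXn2l q20 q21).
have aZ : forall j, j \in Z -> F j = 0 /\ F' j = 0.
  move=> j jZ; have := xZ j jZ; rewrite -/a => aj.
  by rewrite /F /F' !tauE aj !mul0r expr0n.
pose WL := \sum_(j | (val j < l)%N) F j; pose WU := \sum_(j | ~~ (val j < l)%N) F j.
pose WL' := \sum_(j | (val j < l)%N) F' j; pose WU' := \sum_(j | ~~ (val j < l)%N) F' j.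
have WL0 : 0 <= WL by apply: sumr_ge0.
have WU0 : 0 <= WU by apply: sumr_ge0.
have WL0' : 0 <= WL' by apply: sumr_ge0.
have WU0' : 0 <= WU' by apply: sumr_ge0.
have P0 : 0 <= q2 ^+ N by apply: exprn_ge0.
have I1 : WU <= q2 ^+ N * WU'.
  rewrite /WU /WU' mulr_sumr; apply: ler_sum => j Hj.
  by rewrite FF mulrC; apply: ler_wpM2r => //; apply: hU.
have I2 : q2 ^+ N * WL' <= e ^+ 2 * WL.
  rewrite /WL /WL' !mulr_sumr; apply: ler_sum => j Hj.
  by rewrite FF (mulrC (F' j)) [X in _ <= X]mulrA; apply: ler_wpM2r => //; exact: hL.
have I3 : e * (WL' + WU') <= WL'.
  have -> : WL' + WU' = \sum_j F' j by rewrite [RHS](bigID (fun j : 'I_d => (val j < l)%N)).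
  apply: le_trans K2 _; apply: sum_le => // j jS.
  case: (boolP (val j < l)%N) => Hj; first by left.
  by right; apply: (proj2 (aZ j _)); rewrite !inE jS Hj.
have I4 : e * (WL + WU) <= WU.
  have -> : WL + WU = \sum_j F j by rewrite [RHS](bigID (fun j : 'I_d => (val j < l)%N)).
  apply: le_trans K1 _; apply: sum_le => // j jS.
  case: (boolP (val j < l)%N) => Hj; last by left.
  by right; apply: (proj1 (aZ j _)); rewrite !inE jS Hj orbT.
have I5 : 0 < WL + WU.
  have -> : WL + WU = \sum_j F j by rewrite [RHS](bigID (fun j : 'I_d => (val j < l)%N)).
  have : a != 0 by apply: contra x0 => /eqP ax; apply/eqP; apply: (rf_inj rfA).
  move=> /eqP; rewrite -rowP => ne.
  have [j aj] : exists j, a 0 j != 0.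
    apply/existsP; rewrite -negb_forall; apply/negP => /forallP H; apply: ne => j.
    by have := H j; move=> /eqP ->; rewrite mxE.
  rewrite (bigD1 j) //= ltr_wpDr ?sumr_ge0 //.
  rewrite /F tauE lt_def sqr_ge0 andbT sqrf_eq0 mulf_neq0 // invr_eq0 expf_neq0 // gt_eqF //.
set P := q2 ^+ N in P0 I1 I2.
have A1 : e * WU' <= (1 - e) * WL' by lra.
have A2 : e * WU <= e * ((1 - e) * e * WL).
  apply: le_trans (_ : e * (P * WU') <= _); first by apply: ler_wpM2l => //; exact: ltW.
  have -> : e * (P * WU') = P * (e * WU') by ring.
  apply: le_trans (_ : P * ((1 - e) * WL') <= _); first exact: ler_wpM2l.
  have -> : P * ((1 - e) * WL') = (1 - e) * (P * WL') by ring.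
  have -> : e * ((1 - e) * e * WL) = (1 - e) * (e ^+ 2 * WL) by ring.
  apply: ler_wpM2l => //; lra.
have A3 : WU <= (1 - e) * e * WL by rewrite -(ler_pM2l e0').
have A4 : e * WL <= (1 - e) * ((1 - e) * e * WL).
  apply: le_trans (_ : (1 - e) * WU <= _); first lra.
  apply: ler_wpM2l => //; lra.
have A5 : WL * (e * (e * (2 - e))) <= 0 by nra.
have A6 : 0 < e * (e * (2 - e)) by rewrite !mulr_gt0 //; lra.
have WLz : WL <= 0 by rewrite -(pmulr_lle0 _ A6).
have : WU <= 0 by nra.
lra.
Qed.
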